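(* Let $S$ be an isolated invariant set for $f$. Suppose $P'=(N,L')$ and $P=(N\cup L,L)$ are filtration pairs for $S$ with $L'\subset L$ and $f(L)\subset\operatorname{Int}L$. Then the pointed space maps $f_{P'}$ and $f_P$ are shift equivalent.
   Context: Let $X$ be a locally compact metric space, $U\subset X$ open and $f:U\to X$ continuous. A solution through $x$ is a map $\sigma:\mathbb Z\to U$ with $\sigma(0)=x$ and $f(\sigma(n))=\sigma(n+1)$ for all $n$; for $N\subset U$, $\operatorname{Inv}N$ is the set of $x\in N$ admitting a solution through $x$ with values in $N$. A compact $N\subset U$ is an isolating neighborhood if $\operatorname{Inv}N\subset\operatorname{Int}N$; $S$ is an isolated invariant set if $S=\operatorname{Inv}N$ for some isolating neighborhood $N$. The exit set is $N^-=\{x\in N:f(x)\notin\operatorname{Int}N\}$. A filtration pair for $S$ is a pair of compact sets $L\subset N$ in the interior of the domain of $f$, each the closure of its interior, with (1) $\operatorname{cl}(N\setminus L)$ an isolating neighborhood and $\operatorname{Inv}\operatorname{cl}(N\setminus L)=S$; (2) $L$ a neighborhood of $N^-$ in $N$; (3) $f(L)\cap\operatorname{cl}(N\setminus L)=\emptyset$. For a filtration pair $P=(N,L)$, $N_L=N/L$ with $L$ collapsed to the base point $[L]$ (if $L=\emptyset$, a disjoint point $[L]$ is adjoined), $p:N\to N_L$ the quotient map, and the pointed space map $f_P:N_L\to N_L$ is $f_P([L])=[L]$, $f_P(p(x))=p(f(x))$ for $x\in N\setminus L$. Base-point preserving maps $F:Y\to Y$, $G:Y'\to Y'$ are shift equivalent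 if there exist $m\in\mathbb Z^+$ and continuous base-point preserving $r:Y\to Y'$, $s:Y'\to Y$ with $r\circ F=G\circ r$, $s\circ G=F\circ s$, $s\circ r=F^m$, $r\circ s=G^m$. *)

(* Defs.v *)
From HB Require Import structures.
From mathcomp Require Import all_boot all_order all_algebra.
From mathcomp Require Import all_classical all_reals topology normedtype.
Set Implicit Arguments. Unset Strict Implicit. Unset Printing Implicit Defensive.
Import Order.TTheory GRing.Theory Num.Theory.
Local Open Scope classical_set_scope.
Local Open Scope ring_scope.

Section Conley.
Context {X : topologicalType}.
Variables (U : set X) (f : X -> X).

Definition solution_in (N : set X) (x : X) :=
  exists sigma : int -> X, sigma 0 = x /\ (forall n, U (sigma n)) /\
    (forall n, f (sigma n) = sigma (n + 1)) /\ (forall n, N (sigma n)).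

Definition Inv (N : set X) : set X := [set x | N x /\ solution_in N x].

Definition isolating_nbhd (N : set X) :=
  compact N /\ N `<=` U /\ Inv N `<=` interior N.

Definition isolated_invariant (S : set X) :=
  exists N, isolating_nbhd N /\ S = Inv N.

Definition exit_set (N : set X) : set X := [set x | N x /\ ~ interior N (f x)].

Definition ropen (N A : set X) := exists O, open O /\ A = O `&` N.

Definition rnbhd (N L A : set X) :=
  exists O, open O /\ A `<=` O /\ O `&` N `<=` L.

Definition filtration_pair (S N L : set X) :=
  [/\ compact N /\ compact L, L `<=` N /\ N `<=` interior U,
   closure (interior N) = N /\ closure (interior L) = L /\
   (isolating_nbhd (closure (N `\` L)) /\ Inv (closure (N `\` L)) = S),
   rnbhd N L (exit_set N) &
   f @` L `&` closure (N `\` L) = set0].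

(* Pointed quotient space N_L, realised inside option X:
   None is the base point [L]; Some x stands for the class of x in N \ L. *)
Definition qproj (L : set X) (x : X) : option X :=
  if asbool (L x) then None else Some x.

Definition qcarrier (N L : set X) : set (option X) :=
  [set None] `|` (Some @` (N `\` L)).

(* quotient topology on N_L (base point isolated if L is empty) *)
Definition qopen (N L : set X) (V : set (option X)) :=
  V `<=` qcarrier N L /\ ropen N (N `&` (qproj L @^-1` V)).

Definition fP (L : set X) (y : option X) : option X :=
  match y with None => None | Some x => qproj L (f x) end.

End Conley.

Definition pcont {T : Type} (Q Q' : set (option T))
  (O O' : set (option T) -> Prop) (r : option T -> option T) :=
  [/\ r None = None, (forall y, Q y -> Q' (r y)) &
      forall V, O' V -> O (Q `&` (r @^-1` V))].

Definition shift_equivalent {T : Type} (Q Q' : set (option T))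
  (O O' : set (option T) -> Prop) (F G : option T -> option T) :=
  exists (m : nat) (r s : option T -> option T),
    [/\ (0 < m)%N, pcont Q Q' O O' r /\ pcont Q' Q O' O s,
        (forall y, Q y -> r (F y) = G (r y)) /\
        (forall y, Q' y -> s (G y) = F (s y)),
        (forall y, Q y -> s (r y) = iter m F y) &
        (forall y, Q' y -> r (s y) = iter m G y)].

(* Main.v *)
Require Import Defs.
From HB Require Import structures.
From mathcomp Require Import all_boot all_order all_algebra.
From mathcomp Require Import all_classical all_reals topology normedtype.
From mathcomp Require Import zify.
Set Implicit Arguments. Unset Strict Implicit. Unset Printing Implicit Defensive.
Local Open Scope classical_set_scope.

Section Gen.
Context {T : topologicalType}.

Lemma nbhs_open (x : T) A : nbhs x A -> exists B, [/\ open B, B x & B `<=` A].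
Proof. by rewrite nbhsE => -[B [oB Bx] BA]; exists B. Qed.

Lemma ropen_local (N A : set T) : A `<=` N ->
  (forall x, A x -> exists B, [/\ open B, B x & B `&` N `<=` A]) -> ropen N A.
Proof.
move=> AN H.
exists (\bigcup_(B in [set B | open B /\ B `&` N `<=` A]) B); split.
  by apply: bigcup_open => B [].
apply/seteqP; split=> x.
- move=> Ax; have [B [oB Bx BA]] := H x Ax; split; [by exists B | exact: AN].
- by move=> [[B [_ BA] Bx] Nx]; apply: BA.
Qed.

Lemma qprojT (L : set T) x : L x -> qproj L x = None.
Proof. by move=> Lx; rewrite /qproj asboolT. Qed.
Lemma qprojF (L : set T) x : ~ L x -> qproj L x = Some x.
Proof. by move=> Lx; rewrite /qproj asboolF. Qed.

End Gen.

Lemma pcont_comp {T : Type} (Q1 Q2 Q3 : set (option T)) O1 O2 O3 h g :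
  pcont Q1 Q2 O1 O2 h -> pcont Q2 Q3 O2 O3 g -> pcont Q1 Q3 O1 O3 (g \o h).
Proof.
move=> [h0 hQ hO] [g0 gQ gO]; split; first by rewrite /= h0 g0.
  by move=> y Qy; apply: gQ; apply: hQ.
move=> V OV.
have -> : Q1 `&` (g \o h) @^-1` V = Q1 `&` h @^-1` (Q2 `&` g @^-1` V).
  apply/seteqP; split=> y [Q1y] /=; last by case.
  by move=> Vy; split=> //; split=> //; apply: hQ.
exact/hO/gO.
Qed.

Lemma pcont_iter {T : Type} (Q : set (option T)) O F :
  (forall V, O V -> V `<=` Q) -> pcont Q Q O O F ->
  forall m, pcont Q Q O O (iter m F).
Proof.
move=> OQ Fc; elim=> [|m IH].
  split=> //= V OV; suff -> : Q `&` id @^-1` V = V by [].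
  by apply/seteqP; split=> y; [case|move=> Vy; split=> //; apply: OQ Vy].
have -> : iter m.+1 F = F \o iter m F by [].
exact: pcont_comp IH Fc.
Qed.
Section Main.
Context {T : topologicalType} (U : set T) (f : T -> T) (S N L L' : set T).
Hypothesis hT : hausdorff_space T.
Hypothesis fc : {in U, continuous f}.
Hypothesis hN : compact N.
Hypothesis hL' : compact L'.
Hypothesis hL : compact L.
Hypothesis L'N : L' `<=` N.
Hypothesis NU : N `<=` interior U.
Hypothesis hex : rnbhd N L' (exit_set f N).
Hypothesis h3' : f @` L' `&` closure (N `\` L') = set0.
Hypothesis hS' : Defs.Inv U f (closure (N `\` L')) = S.
Hypothesis L'L : L' `<=` L.
Hypothesis fL : f @` L `<=` interior L.
Hypothesis h3 : f @` L `&` closure ((N `|` L) `\` L) = set0.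
Hypothesis hS : Defs.Inv U f (closure ((N `|` L) `\` L)) = S.

Let F := fP f L'.
Let G := fP f L.
Let Q := qcarrier N L'.
Let Q' := qcarrier (N `|` L) L.

Lemma clN : closed N. Proof. exact: compact_closed. Qed.
Lemma clL : closed L. Proof. exact: compact_closed. Qed.
Lemma clL' : closed L'. Proof. exact: compact_closed. Qed.

Lemma fcN x : N x -> {for x, continuous f}.
Proof. move=> /NU /interior_subset Ux; apply: fc; by rewrite inE. Qed.

Lemma exitN x : N x -> ~ L' x -> interior N (f x).
Proof.
move=> Nx L'x; apply: contrapT => nI.
case: hex => O [_ [EO OL']]; apply: L'x; apply: OL'; split; last exact: Nx.
by apply: EO; split.
Qed.

Lemma exitN' x : N x -> ~ L' x -> N (f x).
Proof. by move=> Nx L'x; apply: interior_subset; apply: exitN. Qed.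

Lemma fLL x : L x -> L (f x).
Proof. by move=> Lx; apply: interior_subset; apply: fL; exists x. Qed.

Lemma F_None : F None = None. Proof. by []. Qed.

Lemma FQ y : Q y -> Q (F y).
Proof.
case=> [->|[x [Nx L'x] <-]]; first by left.
rewrite /F /=; have [L'fx|L'fx] := pselect (L' (f x)).
  by rewrite qprojT //; left.
by rewrite qprojF //; right; exists (f x) => //; split=> //; apply: exitN'.
Qed.

Lemma qprojQ x : N x -> Q (qproj L' x).
Proof.
move=> Nx; have [Lx|Lx] := pselect (L' x); first by rewrite qprojT //; left.
by rewrite qprojF //; right; exists x.
Qed.

Lemma F_cont : pcont Q Q (qopen N L') (qopen N L') F.
Proof.
split=> //; first exact: FQ.
move=> V [VQ [O [oO EO]]]; split; first by move=> ? [].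
apply: ropen_local; first by move=> x [].
move=> x [Nx [_ /= FVx]].
have [L'x|L'x] := pselect (L' x).
- move: FVx; rewrite qprojT // => V0.
  have ncl : ~ closure (N `\` L') (f x).
    move=> cl; have : (f @` L' `&` closure (N `\` L')) (f x) by split=> //; exists x.
    by rewrite h3'.
  have [W [Wn WD]] : exists W, nbhs (f x) W /\ (N `\` L') `&` W = set0.
    apply: contrapT => nW; apply: ncl => W Wn; apply: contrapT => hne.
    apply: nW; exists W; split=> //; apply/seteqP; split=> // z Hz.
    by apply: hne; exists z.
  have := fcN Nx Wn => /nbhs_open [B [oB Bx BW]].
  exists B; split=> // y [By Ny]; split=> //; split; first exact: qprojQ.
  have [L'y|L'y] := pselect (L' y); first by rewrite qprojT.
  rewrite qprojF //= qprojT //; apply: contrapT => L'fy.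
  have : ((N `\` L') `&` W) (f y) by split; [split=> //; apply: exitN'|apply: BW].
  by rewrite WD.
- move: FVx; rewrite qprojF //= => FVx.
  have Nfx := exitN' Nx L'x.
  have Ofx : O (f x) by have : (N `&` qproj L' @^-1` V) (f x) by [] ; rewrite EO => -[].
  have : nbhs (f x) O by apply: open_nbhs_nbhs.
  move=> /(fcN Nx) /nbhs_open [B [oB Bx BO]].
  exists (B `&` ~` L'); split=> //; first by apply: openI => //; apply: closed_openC clL'.
  move=> y [[By L'y] Ny]; split=> //; split; first exact: qprojQ.
  rewrite qprojF //=.
  have : (O `&` N) (f y) by split; [apply: BO|apply: exitN'].
  by rewrite -EO => -[].
Qed.

Definition rmap (y : option T) : option T :=
  match y with None => None | Some x => qproj L x end.

Lemma r_qproj x : rmap (qproj L' x) = qproj L x.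
Proof.
have [L'x|L'x] := pselect (L' x); last by rewrite qprojF.
by rewrite !qprojT //; apply: L'L.
Qed.

Lemma rQ y : Q y -> Q' (rmap y).
Proof.
case=> [->|[x [Nx L'x] <-]]; first by left.
rewrite /=; have [Lx|Lx] := pselect (L x); first by rewrite qprojT //; left.
by rewrite qprojF //; right; exists x => //; split=> //; left.
Qed.

Lemma r_cont : pcont Q Q' (qopen N L') (qopen (N `|` L) L) rmap.
Proof.
split=> //; first exact: rQ.
move=> V [VQ [O [oO EO]]]; split; first by move=> ? [].
apply: ropen_local; first by move=> x [].
move=> x [Nx [_ /= rVx]].
have Ox : O x.
  have : ((N `|` L) `&` qproj L @^-1` V) x by split; [left|rewrite /preimage /= -r_qproj].
  by rewrite EO => -[].
exists O; split=> // y [Oy Ny]; split=> //; split; first exact: qprojQ.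
have : (O `&` (N `|` L)) y by split=> //; left.
by rewrite -EO => -[_]; rewrite /preimage /= -r_qproj.
Qed.

Lemma r_comm y : Q y -> rmap (F y) = G (rmap y).
Proof.
case=> [->|[x [Nx L'x] <-]] //=.
have [Lx|Lx] := pselect (L x).
  rewrite [qproj L x]qprojT //=.
  have [L'fx|L'fx] := pselect (L' (f x)); first by rewrite qprojT.
  by rewrite qprojF //= qprojT //; apply: fLL.
rewrite [qproj L x]qprojF //=.
have [L'fx|L'fx] := pselect (L' (f x)); last by rewrite qprojF.
by rewrite !qprojT //; apply: L'L.
Qed.

Lemma iterFQ m y : Q y -> Q (iter m F y).
Proof. by move=> Qy; elim: m => [|m IH] //=; apply: FQ. Qed.

Lemma iterF_None m : iter m F None = None.
Proof. by elim: m => [|m IH] //=; rewrite IH. Qed.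

Lemma iterF m z : N z -> ~ L' z -> iter m F (Some z) <> None ->
  iter m F (Some z) = Some (iter m f z) /\
  forall j, (j <= m)%N -> N (iter j f z) /\ ~ L' (iter j f z).
Proof.
move=> Nz L'z; elim: m => [|m IH] H.
  by split=> // j; rewrite leqn0 => /eqP ->.
have HF : iter m F (Some z) <> None by move=> E; apply: H; rewrite /= E.
have [E Hj] := IH HF.
have [Nm L'm] := Hj m (leqnn m).
have L'fm : ~ L' (f (iter m f z)).
  by move=> Lf; apply: H; rewrite /= E /= qprojT.
split; first by rewrite /= E /= qprojF.
move=> j; rewrite leq_eqVlt => /orP [/eqP ->|jm]; last exact: Hj.
by split=> //; apply: exitN'.
Qed.

Lemma iterL j z : L z -> L (iter j f z).
Proof. by move=> Lz; elim: j => [|j IH] //=; apply: fLL. Qed.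

Let K := N `&` L `&` closure (N `\` L').

Lemma Kc : compact K.
Proof. apply: compact_closedI; last exact: closed_closure.
by apply: compact_closedI => //; apply: clL. Qed.

Lemma KN x : K x -> N x. Proof. by case=> -[]. Qed.
Lemma KL x : K x -> L x. Proof. by case=> -[]. Qed.

Lemma iter_cont j z : (forall i, (i < j)%N -> N (iter i f z)) ->
  {for z, continuous (iter j f)}.
Proof.
elim: j => [|j IH] H; first exact: cvg_id.
have -> : iter j.+1 f = f \o iter j f by apply: funext => x.
apply: continuous_comp; first by apply: IH => i ij; apply: H; apply: ltnW.
by apply: fcN; apply: H.
Qed.

Definition Seg n := [set z | forall j, (j <= n)%N -> K (iter j f z)].

Lemma Seg_closed n : closed (Seg n).
Proof.
move=> z clz.
suff H : forall j, (j <= n)%N -> forall i, (i <= j)%N -> K (iter i f z).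
  by move=> j jn; apply: (H j jn).
elim=> [|j IH] jn i.
- rewrite leqn0 => /eqP -> /=; apply: contrapT => nK.
  have : nbhs z (~` K) by apply: open_nbhs_nbhs; split=> //; apply: closed_openC; apply: compact_closed => //; exact: Kc.
  move=> /clz [w [Sw nKw]]; apply: nKw; exact: (Sw 0%N).
- rewrite leq_eqVlt => /orP [/eqP ->|]; last by apply: IH; apply: ltnW.
  apply: contrapT => nK.
  have hc : {for z, continuous (iter j.+1 f)}.
    by apply: iter_cont => i' i'j; apply: KN; apply: IH => //; apply: ltnW.
  have : nbhs (iter j.+1 f z) (~` K).
    by apply: open_nbhs_nbhs; split=> //; apply: closed_openC; apply: compact_closed => //; exact: Kc.
  move=> /hc /clz [w [Sw nKw]]; apply: nKw; exact: (Sw j.+1).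
Qed.

Lemma Seg_K n z : Seg n z -> K z. Proof. by move=> H; apply: (H 0%N). Qed.

Lemma Seg_compact n : compact (Seg n).
Proof. exact: (subclosed_compact (@Seg_closed n) Kc (@Seg_K n)). Qed.

Lemma Seg_weak n m z : (m <= n)%N -> Seg n z -> Seg m z.
Proof. by move=> mn H j jm; apply: H; apply: leq_trans jm mn. Qed.

Definition Bset n := iter n f @` Seg (n + n).

Lemma Bset_closed n : closed (Bset n).
Proof.
apply: compact_closed => //; apply: continuous_compact; last exact: Seg_compact.
apply: continuous_in_subspaceT => z; rewrite inE => Sz.
apply: iter_cont => i ilt; apply: KN; apply: Sz.
by apply: leq_trans (ltnW ilt) _; apply: leq_addr.
Qed.

Lemma Bset_dec n : Bset n.+1 `<=` Bset n.
Proof.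
move=> _ [w Sw <-]; exists (f w); last by rewrite iterSr.
move=> j jn; rewrite -iterSr; apply: Sw; rewrite addSn addnS; lia.
Qed.

Lemma Bset_mono k n : (k <= n)%N -> Bset n `<=` Bset k.
Proof.
move=> kn; rewrite -(subnKC kn); elim: (n - k)%N => [|d IH]; first by rewrite addn0.
by rewrite addnS; apply: subset_trans IH; apply: Bset_dec.
Qed.

Lemma Bset_fwd n z : Bset n z -> forall j, (j <= n)%N -> K (iter j f z).
Proof.
move=> [w Sw <-] j jn; rewrite -iterD; apply: Sw; lia.
Qed.

Lemma seq_cluster (C : set T) (u : nat -> T) : compact C -> (forall n, C (u n)) ->
  exists p, C p /\ forall W, nbhs p W -> forall k, exists n, (k <= n)%N /\ W (u n).
Proof.
move=> Cc Cu.
have [p [Cp clp]] : C `&` cluster (u @ \oo) !=set0.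
  by apply: Cc; exists 0%N => // n _; apply: Cu.
exists p; split=> // W Wp k.
have : (u @ \oo) (u @` [set n | (k <= n)%N]).
  by exists k => // n /= kn; exists n.
move=> /clp /(_ Wp) [_ [[n kn <-] Wn]]; by exists n.
Qed.

Lemma clus_closed (u : nat -> T) p B k :
  (forall W, nbhs p W -> forall k, exists n, (k <= n)%N /\ W (u n)) ->
  closed B -> (forall n, (k <= n)%N -> B (u n)) -> B p.
Proof.
move=> clp cB Bu; apply: cB => W Wp.
have [n [kn Wn]] := clp W Wp k; exists (u n); split=> //; exact: Bu.
Qed.

Lemma clus_f (u : nat -> T) p z :
  (forall W, nbhs p W -> forall k, exists n, (k <= n)%N /\ W (u n)) ->
  N p -> (forall n, f (u n) = z) -> f p = z.
Proof.
move=> clp Np fu; apply: hT => A B Ap Bz.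
have [n [_ An]] := clp _ (fcN Np Ap) 0%N.
by exists z; split; [rewrite -(fu n)|apply: nbhs_singleton].
Qed.

Definition Dset := [set z | forall k, Bset k z].

Lemma D_K z : Dset z -> K z.
Proof. by move=> Dz; apply: (Bset_fwd (Dz 0%N) (leqnn 0)). Qed.

Lemma D_back z : Dset z -> exists u, Dset u /\ f u = z.
Proof.
move=> Dz.
have H : forall n, exists w, Seg (n.+1 + n.+1) w /\ iter n.+1 f w = z.
  by move=> n; have [w Sw <-] := Dz n.+1; exists w.
case: (choice H) => ws Hws.
pose un n := iter n f (ws n).
have Bun : forall n, Bset n (un n).
  move=> n; exists (ws n) => //; apply: Seg_weak (proj1 (Hws n)); lia.
have Kun : forall n, K (un n) by move=> n; apply: (Bset_fwd (Bun n) (leq0n n)).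
have [u [Ku clu]] := seq_cluster Kc Kun.
exists u; split.
  move=> k; apply: (clus_closed (k := k) clu (@Bset_closed k)) => n kn.
  by apply: (Bset_mono kn); apply: Bun.
apply: (clus_f clu (KN Ku)) => n; rewrite /un -iterS; exact: (proj2 (Hws n)).
Qed.

Lemma uniform_exit : exists m, forall z, N z -> L z -> ~ L' z ->
  iter m F (Some z) = None.
Proof.
apply: contrapT => H.
have Hm : forall m, exists z, Seg m z.
  move=> m; apply: contrapT => nz; apply: H; exists m => z Nz Lz L'z.
  apply: contrapT => Fn; apply: nz; exists z => j jm.
  have [_ Hj] := iterF Nz L'z Fn; have [Nj L'j] := Hj j jm.
  split; first by split=> //; apply: iterL.
  by apply: subset_closure; split.
case: (choice Hm) => zs Hzs.
pose pn n := iter n f (zs (n + n)).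
have Bpn : forall n, Bset n (pn n) by move=> n; exists (zs (n + n)).
have Kpn : forall n, K (pn n) by move=> n; apply: (Bset_fwd (Bpn n) (leq0n n)).
have [p [Kp clp]] := seq_cluster Kc Kpn.
have Dp : Dset p.
  move=> k; apply: (clus_closed (k := k) clp (@Bset_closed k)) => n kn.
  by apply: (Bset_mono kn); apply: Bpn.
have Hg : forall z, exists u, Dset z -> Dset u /\ f u = z.
  move=> z; have [Dz|nDz] := pselect (Dset z).
    by have [u Hu] := D_back Dz; exists u.
  by exists z.
case: (choice Hg) => g Hgz.
have Dg : forall k, Dset (iter k g p).
  by elim=> [|k IH] //=; apply: (proj1 (Hgz _ IH)).
pose sigma (n : int) := match n with Posz k => iter k f p | Negz k => iter k.+1 g p end.
have Ksig : forall n, K (sigma n).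
  case=> k /=; last exact: D_K (Dg k.+1).
  exact: (Bset_fwd (Dp k) (leqnn k)).
have Ip : Defs.Inv U f (closure (N `\` L')) p.
  split; first by case: Kp.
  exists sigma; split=> //; split.
    by move=> n; apply: interior_subset; apply: NU; apply: KN.
  split; last by move=> n; case: (Ksig n).
  case=> k.
    have -> : (Posz k + 1 = Posz k.+1)%R by lia.
    by [].
  case: k => [|k].
    have -> : (Negz 0 + 1 = Posz 0)%R by [].
    by rewrite /= (proj2 (Hgz _ Dp)).
  have -> : (Negz k.+1 + 1 = Negz k)%R by rewrite !NegzE; lia.
  by rewrite /sigma iterS (proj2 (Hgz _ (Dg k.+1))).
move: Ip; rewrite hS' -hS => -[clp' _].
have : (f @` L `&` closure ((N `|` L) `\` L)) p.
  split=> //; exists (g p); last exact: (proj2 (Hgz _ Dp)).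
  by apply: KL; apply: D_K; apply: (proj1 (Hgz _ Dp)).
by rewrite h3.
Qed.

Lemma iter_comm k y : Q y -> rmap (iter k F y) = iter k G (rmap y).
Proof.
move=> Qy; elim: k => [|k IH] //=.
by rewrite r_comm ?IH //; apply: iterFQ.
Qed.

Lemma main_sec : shift_equivalent Q Q' (qopen N L') (qopen (N `|` L) L) F G.
Proof.
have [m0 Hm0] := uniform_exit.
pose m := m0.+1.
have Hm : forall z, N z -> L z -> ~ L' z -> iter m F (Some z) = None.
  by move=> z Nz Lz L'z; rewrite /m iterS Hm0.
have Q'Q : forall y, Q' y -> Q y.
  move=> y [->|[x [[Nx|Lx] nLx] <-]]; [by left| |by case: nLx].
  by right; exists x => //; split=> // /L'L.
have Q'N : forall x, Q' (Some x) -> N x /\ ~ L x.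
  by move=> x [//|[x' [[Nx|Lx] nLx] [<-]]]; [|case: nLx].
exists m, rmap, (iter m F); split => //.
- split; first exact: r_cont.
  have [_ _ FmO] := pcont_iter (fun V (hV : qopen N L' V) => proj1 hV) F_cont m.
  split; [exact: iterF_None|by move=> y /Q'Q; apply: iterFQ|].
  move=> V OV; have [_ [O [oO EO]]] := FmO V OV.
  split; first by move=> ? [].
  apply: ropen_local; first by move=> x [].
  have good : forall y, N y -> ~ L y -> O y ->
      ((N `|` L) `&` qproj L @^-1` (Q' `&` iter m F @^-1` V)) y.
    move=> y Ny nLy Oy.
    have : (O `&` N) y by [].
    rewrite -EO => -[_ [_ Vy]]; move: Vy; rewrite /= qprojF; last by move/L'L.
    move=> Vy; split; first by left.
    rewrite /= qprojF //; split=> //; right; exists y => //; split; [by left|exact: nLy].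
  move=> x [NLx [Q'x /= Vx]].
  have [Lx|nLx] := pselect (L x).
  + move: Vx; rewrite qprojT // iterF_None => V0.
    exists (O `|` ~` N); split.
    * by apply: openU => //; apply: closed_openC; apply: clN.
    * have [Nx|nNx] := pselect (N x); last by right.
      left; have : (N `&` qproj L' @^-1` (Q `&` iter m F @^-1` V)) x.
        split=> //; split; first exact: qprojQ.
        have [L'x|nL'x] := pselect (L' x).
          by rewrite /= qprojT // iterF_None.
        by rewrite qprojF //; have := Hm x Nx Lx nL'x; rewrite /preimage /= => ->.
      by rewrite EO => -[].
    * move=> y [[Oy|nNy] NLy].
        have [Ly|nLy] := pselect (L y).
          split=> //; rewrite /= qprojT //; split; first by left.
          by rewrite /= iterF_None.
        by apply: good => //; case: NLy.
      have [Ly|nLy] := pselect (L y).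
        split=> //; rewrite /= qprojT //; split; first by left.
        by rewrite /= iterF_None.
      by case: NLy.
  + have Nx : N x by case: NLx.
    exists (O `&` ~` L); split.
    * by apply: openI => //; apply: closed_openC; apply: clL.
    * split=> //; have : (N `&` qproj L' @^-1` (Q `&` iter m F @^-1` V)) x.
        split=> //; split; first exact: qprojQ.
        by rewrite /= qprojF //; [move: Vx; rewrite qprojF|move/L'L].
      by rewrite EO => -[].
    * move=> y [[Oy nLy] NLy]; apply: good => //; by case: NLy.
- split; first exact: r_comm.
  case=> [x|] Q'y; last by rewrite /= !iterF_None.
  have [Nx nLx] := Q'N x Q'y.
  have nL'x : ~ L' x by move/L'L.
  rewrite -[RHS]iterS iterSr.
  change (iter m F (qproj L (f x)) = iter m F (qproj L' (f x))).
  have [Lfx|nLfx] := pselect (L (f x)).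
    rewrite [qproj L (f x)]qprojT // iterF_None.
    have [L'fx|nL'fx] := pselect (L' (f x)); first by rewrite qprojT // iterF_None.
    by rewrite qprojF // Hm //; apply: exitN'.
  by rewrite !qprojF //; move/L'L.
- case=> [x|] Qy; last by rewrite /= !iterF_None.
  have [Nx nL'x] : N x /\ ~ L' x by case: Qy => [//|[x' [? ?] [<-]]].
  change (iter m F (qproj L x) = iter m F (Some x)).
  have [Lx|nLx] := pselect (L x); last by rewrite qprojF.
  by rewrite qprojT // iterF_None Hm.
- move=> y Q'y; rewrite iter_comm; last exact: Q'Q.
  case: y Q'y => [x|] // /Q'N [_ nLx].
  by rewrite /= qprojF.
Qed.

End Main.

Unset Implicit Arguments.

Theorem mainTheorem18 (R : realType) (X : pseudoMetricType R)
  (U : set X) (f : X -> X) (S N L L' : set X) :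
  hausdorff_space X -> locally_compact [set: X] ->
  open U -> {within U, continuous f} ->
  isolated_invariant U f S ->
  filtration_pair U f S N L' ->
  filtration_pair U f S (N `|` L) L ->
  L' `<=` L -> f @` L `<=` interior L ->
  shift_equivalent (qcarrier N L') (qcarrier (N `|` L) L)
    (qopen N L') (qopen (N `|` L) L) (fP f L') (fP f L).
Proof.
move=> hT _ oU fcU _ FP' FP L'L fL.
have fc : {in U, continuous f} by rewrite -continuous_open_subspace.
case: FP' => [[hN hL'] [L'N NU] [_ [_ [_ hS']]] hex h3'].
case: FP => [[_ hL] _ [_ [_ [_ hS]]] _ h3].
exact: (@main_sec X U f S N L L' hT fc hN hL' hL NU hex h3' hS' L'L fL h3 hS).
Qed.
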